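(* Let $\mathcal{A}\subset\mathbb{R}^n$ be a nonempty compact set, $\Xi\subseteq\mathbb{R}^n$, $V:\mathbb{R}^n\to\mathbb{R}_+$ and $\Psi:\mathbb{R}^n\rightrightarrows\mathbb{R}^n$, and assume one of the following two settings holds: (i) $\Xi$ is nonempty, closed and convex, $\mathcal{A}$ is convex, and $V(y)=\tfrac12\|y-\mathbf{P}_{\mathcal{A}}(y)\|^2$; (ii) $\Xi=\mathbb{R}^n$ and $V$ is continuously differentiable with locally Lipschitz gradient, positive definite and radially unbounded with respect to $\mathcal{A}$. Assume $\Psi$ is SPSP with respect to $V$ on $\Xi$, that for every $y\in\Xi$, $\Psi(y)$ is a singleton $\{s(y)\}$, and that for every $\sigma>0$ there exists $L>0$ such that $\|s(y_1)-s(y_2)\|\le L\|y_1-y_2\|$ for all $y_1,y_2\in\Xi\cap\bar B_\sigma(\mathcal{A})$. Then $\mathcal{A}$ is SPAS for the iterative method $y^+=\mathbf{P}_\Xi[y-\alpha s(y)]$ with parameter $\alpha>0$.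
   Context: $\|\cdot\|$ is Euclidean; $\mathbf{P}_S$ is the orthogonal projection onto a nonempty closed convex set $S$. For compact $S$ and $r>0$: $\bar B_r(S)=\{x:\|x-\mathbf{P}_S(x)\|\le r\}$, $B_r(S)=\{x:\|x-\mathbf{P}_S(x)\|<r\}$ (distance to $S$). A function $V$ is positive definite w.r.t. a closed set $S$ if $V=0$ on $S$ and $V>0$ off $S$; it is radially unbounded w.r.t. $S$ (on a set $\Xi$) if for every $B\in\mathbb{R}$ there is $r>0$ with $V(x)>B$ for all $x$ (in $\Xi$) outside $\bar B_r(S)$. SPSP: Let $V:\mathbb{R}^n\to\mathbb{R}_+$ be differentiable, positive definite and radially unbounded w.r.t. compact $\mathcal{A}$, and let $\Xi$ strictly contain $\mathcal{A}$ (every point of $\mathcal{A}$ has an open ball around it contained in $\Xi$). $\Psi$ is semiglobally, practically, strictly pseudogradient (SPSP) w.r.t. $V$ on $\Xi$ if there exist $\epsilon\ge0$, $b\ge0$ such that $\nabla V(y)^Ts\ge -b$ for all $y\in\Xi\cap\bar B_\epsilon(\mathcal{A})$, $s\in\Psi(y)$, and for every $\sigma>\epsilon$ there is a continuous $\phi_{\sigma,\epsilon}:\mathbb{R}^n\to\mathbb{R}$, positive on $\Xi\cap(\bar B_\sigma(\mathcal{A})\setminus B_\epsilon(\mathcal{A}))$ and radially unbounded w.r.t. $\mathcal{A}$ on $\Xi$, with $\nabla V(y)^Ts\ge\phi_{\sigma,\epsilon}(y)$ for all $y\in\Xi\cap(\bar B_\sigma(\mathcal{A})\setminus B_\epsilon(\mathcal{A}))$,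 $s\in\Psi(y)$. SPAS (for the iteration with parameter $\alpha$; statements below concern every sequence $(y(t))_{t\in\mathbb{N}}$ with $y(0)\in\Xi$, $y(t+1)=\mathbf{P}_\Xi[y(t)-\alpha s(y(t))]$): $\mathcal{A}$ is practically stable if for some $\check\rho_s>0$ and every $\rho_s>\check\rho_s$ there exist $\delta>0$ and a nonempty set $P_s\subset(0,\infty)$ such that whenever $\alpha\in P_s$ and $y(0)\in\bar B_\delta(\mathcal{A})\cap\Xi$, $y(t)\in\bar B_{\rho_s}(\mathcal{A})\cap\Xi$ for all $t$. A compact $S$ is uniformly attractive on compact $\Omega$ if for every $\varepsilon>0$ with $\bar B_\varepsilon(S)\cap\Xi\subset\Omega\cap\Xi$ there is $T\in\mathbb{N}$ such that $y(t)\in\bar B_\varepsilon(S)$ whenever $y(0)\in\Omega$ and $t\ge T$. $\mathcal{A}$ is semiglobally practically attractive if for some $\check\rho_a>0$ and all $\sigma>\rho_a>\check\rho_a$ there is a nonempty $P_a\subset(0,\infty)$ such that whenever $\alpha\in P_a$, $\bar B_{\rho_a}(\mathcal{A})$ is uniformly attractive on $\bar B_\sigma(\mathcal{A})$. $\mathcal{A}$ is SPAS (semiglobally practically asymptotically stable) if it is practically stable and semiglobally practically attractive. *)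

(* Defs.v *)
From HB Require Import structures.
From mathcomp Require Import all_boot all_order all_algebra.
From mathcomp Require Import all_classical all_reals all_analysis.
Set Implicit Arguments. Unset Strict Implicit. Unset Printing Implicit Defensive.
Import Order.TTheory GRing.Theory Num.Theory.
Import numFieldNormedType.Exports.
Local Open Scope classical_set_scope.
Local Open Scope ring_scope.

Section Defs.
Variables (R : realType) (n : nat).
Local Notation vec := 'rV[R]_n.

Definition dotv (x y : vec) : R := \sum_(i < n) x ord0 i * y ord0 i.
Definition enorm (x : vec) : R := Num.sqrt (dotv x x).

(* P_S(x): a Euclidean nearest point of S to x (unique when S is nonempty
   closed convex; exists for S nonempty compact).  Default x otherwise. *)
Definition projS (S : set vec) (x : vec) : vec :=
  xget x [set p | S p /\ forall q, S q -> enorm (x - p) <= enorm (x - q)].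

Definition dist (S : set vec) (x : vec) : R := enorm (x - projS S x).

Definition cball (r : R) (S : set vec) : set vec := [set x | dist S x <= r].
Definition oball (r : R) (S : set vec) : set vec := [set x | dist S x < r].

Definition grad (V : vec -> R) (y : vec) : vec :=
  \row_(i < n) ('D_(delta_mx ord0 i) V y).

Definition pos_def (S : set vec) (V : vec -> R) : Prop :=
  (forall x, S x -> V x = 0) /\ (forall x, ~ S x -> 0 < V x).

Definition rad_unb_on (S Xi : set vec) (V : vec -> R) : Prop :=
  forall B : R, exists r : R, 0 < r /\
    forall x, Xi x -> ~ cball r S x -> B < V x.

Definition rad_unb (S : set vec) (V : vec -> R) : Prop := rad_unb_on S setT V.

Definition strictly_contains (Xi A : set vec) : Prop :=
  forall a, A a -> exists r : R, 0 < r /\ forall x, enorm (x - a) < r -> Xi x.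

Definition SPSP (A Xi : set vec) (V : vec -> R) (Psi : vec -> set vec) : Prop :=
  strictly_contains Xi A /\
  exists eps b : R, 0 <= eps /\ 0 <= b /\
    (forall y sv, Xi y -> cball eps A y -> Psi y sv -> - b <= dotv (grad V y) sv) /\
    (forall sigma : R, eps < sigma ->
       exists phi : vec -> R, continuous phi /\
         (forall y, Xi y -> cball sigma A y -> ~ oball eps A y -> 0 < phi y) /\
         rad_unb_on A Xi phi /\
         (forall y sv, Xi y -> cball sigma A y -> ~ oball eps A y -> Psi y sv ->
            phi y <= dotv (grad V y) sv)).

Definition trajectory (Xi : set vec) (s : vec -> vec) (alpha : R) (y : nat -> vec) : Prop :=
  Xi (y 0%N) /\ forall t, y t.+1 = projS Xi (y t - alpha *: s (y t)).

Definition practically_stable (A Xi : set vec) (s : vec -> vec) : Prop :=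
  exists rho_chk : R, 0 < rho_chk /\
    forall rho_s : R, rho_chk < rho_s ->
      exists delta : R, 0 < delta /\
      exists Ps : set R, Ps !=set0 /\ (forall a, Ps a -> 0 < a) /\
        forall alpha y, Ps alpha -> trajectory Xi s alpha y ->
          cball delta A (y 0%N) -> forall t, cball rho_s A (y t) /\ Xi (y t).

Definition unif_attractive (Xi : set vec) (s : vec -> vec) (alpha : R)
    (S Omega : set vec) : Prop :=
  forall eps : R, 0 < eps -> cball eps S `&` Xi `<=` Omega `&` Xi ->
    exists T : nat, forall y, trajectory Xi s alpha y -> Omega (y 0%N) ->
      forall t, (T <= t)%N -> cball eps S (y t).

Definition semiglobally_practically_attractive (A Xi : set vec) (s : vec -> vec) : Prop :=
  exists rho_chk : R, 0 < rho_chk /\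
    forall sigma rho_a : R, rho_chk < rho_a -> rho_a < sigma ->
      exists Pa : set R, Pa !=set0 /\ (forall a, Pa a -> 0 < a) /\
        forall alpha, Pa alpha ->
          unif_attractive Xi s alpha (cball rho_a A) (cball sigma A).

Definition SPAS (A Xi : set vec) (s : vec -> vec) : Prop :=
  practically_stable A Xi s /\ semiglobally_practically_attractive A Xi s.

Definition C1_loc_lip_grad (V : vec -> R) : Prop :=
  (forall y, differentiable V y) /\ continuous (grad V) /\
  (forall y, exists r L : R, 0 < r /\ 0 < L /\
     forall z1 z2, enorm (z1 - y) < r -> enorm (z2 - y) < r ->
       enorm (grad V z1 - grad V z2) <= L * enorm (z1 - z2)).

End Defs.

(* Main.v *)
Require Import Defs.
From HB Require Import structures.
From mathcomp Require Import all_boot all_order all_algebra.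
From mathcomp Require Import all_classical all_reals all_analysis.
From mathcomp Require Import ring lra.
Set Implicit Arguments. Unset Strict Implicit. Unset Printing Implicit Defensive.
Import Order.TTheory GRing.Theory Num.Theory.
Import numFieldNormedType.Exports.
Local Open Scope classical_set_scope.
Local Open Scope ring_scope.




Section Basic.
Variables (R : realType) (n : nat).
Local Notation vec := 'rV[R]_n.
Implicit Types x y z u v : vec.

Lemma dotvC x y : dotv x y = dotv y x.
Proof. by apply: eq_bigr => i _; rewrite mulrC. Qed.
Lemma dotvDl x y z : dotv (x + y) z = dotv x z + dotv y z.
Proof. by rewrite /dotv -big_split; apply: eq_bigr => i _; rewrite !mxE mulrDl. Qed.
Lemma dotvDr x y z : dotv z (x + y) = dotv z x + dotv z y.
Proof. by rewrite dotvC dotvDl !(dotvC z). Qed.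
Lemma dotvZl a x y : dotv (a *: x) y = a * dotv x y.
Proof. by rewrite /dotv mulr_sumr; apply: eq_bigr => i _; rewrite !mxE mulrA. Qed.
Lemma dotvZr a x y : dotv y (a *: x) = a * dotv y x.
Proof. by rewrite dotvC dotvZl dotvC. Qed.
Lemma dotvNl x y : dotv (- x) y = - dotv x y.
Proof. by rewrite -scaleN1r dotvZl mulN1r. Qed.
Lemma dotvNr x y : dotv y (- x) = - dotv y x.
Proof. by rewrite dotvC dotvNl dotvC. Qed.
Lemma dotvBl x y z : dotv (x - y) z = dotv x z - dotv y z.
Proof. by rewrite dotvDl dotvNl. Qed.
Lemma dotvBr x y z : dotv z (x - y) = dotv z x - dotv z y.
Proof. by rewrite dotvDr dotvNr. Qed.
Lemma dotv0l x : dotv 0 x = 0.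
Proof. by rewrite /dotv big1 // => i _; rewrite mxE mul0r. Qed.
Lemma dotv0r x : dotv x 0 = 0.
Proof. by rewrite dotvC dotv0l. Qed.
Lemma dotv_ge0 x : 0 <= dotv x x.
Proof. by apply: sumr_ge0 => i _; rewrite -expr2 sqr_ge0. Qed.
Lemma dotv_eq0 x : dotv x x = 0 -> x = 0.
Proof.
move=> /eqP; rewrite psumr_eq0; last by move=> i _; rewrite -expr2 sqr_ge0.
move=> /allP H; apply/rowP => i; rewrite mxE.
by have := H i (mem_index_enum i); rewrite -expr2 sqrf_eq0 => /eqP.
Qed.
Lemma dotv_delta x i : dotv x (delta_mx ord0 i) = x ord0 i.
Proof.
rewrite /dotv (bigD1 i) //= big1 ?addr0; first by rewrite mxE !eqxx mulr1.
by move=> j ji; rewrite mxE (negbTE ji) andbF mulr0.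
Qed.
Lemma coord_le_sum x i : x ord0 i ^+ 2 <= dotv x x.
Proof.
rewrite /dotv (bigD1 i) //= -expr2 lerDl.
by apply: sumr_ge0 => j _; rewrite -expr2 sqr_ge0.
Qed.

Lemma coord_le_mx x i : `|x ord0 i| <= `|x|.
Proof.
have -> : `|x| = mx_norm x by [].
rewrite mx_normrE.
exact: (le_bigmax _ (fun ij : 'I_1 * 'I_n => `|x ij.1 ij.2|) (ord0, i)).
Qed.

Lemma dotv_le_mx x y : `|dotv x y| <= n%:R * (`|x| * `|y|).
Proof.
rewrite /dotv; apply: le_trans (ler_norm_sum _ _ _) _.
have -> : n%:R * (`|x| * `|y|) = \sum_(i < n) (`|x| * `|y|).
  by rewrite sumr_const card_ord mulr_natl.
apply: ler_sum => i _; rewrite normrM.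
by apply: ler_pM => //; apply: coord_le_mx.
Qed.

Definition enormE x : enorm x = Num.sqrt (dotv x x) := erefl.
Lemma enorm_ge0 x : 0 <= enorm x. Proof. exact: sqrtr_ge0. Qed.
Lemma enorm_sqr x : enorm x ^+ 2 = dotv x x.
Proof. by rewrite sqr_sqrtr // dotv_ge0. Qed.
Lemma enorm0 : enorm (0 : vec) = 0.
Proof. by rewrite enormE dotv0l sqrtr0. Qed.
Lemma enorm_eq0 x : enorm x = 0 -> x = 0.
Proof. by move=> h; apply: dotv_eq0; rewrite -enorm_sqr h expr0n. Qed.
Lemma enormN x : enorm (- x) = enorm x.
Proof. by rewrite enormE dotvNl dotvNr opprK. Qed.
Lemma enormB x y : enorm (x - y) = enorm (y - x).
Proof. by rewrite -enormN opprB. Qed.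
Lemma enormZ a x : enorm (a *: x) = `|a| * enorm x.
Proof. by rewrite enormE dotvZl dotvZr mulrA -expr2 sqrtrM ?sqr_ge0 // sqrtr_sqr. Qed.

Lemma CS x y : dotv x y <= enorm x * enorm y.
Proof.
have [->|y0] := eqVneq y 0; first by rewrite dotv0r enorm0 mulr0.
have hy : 0 < dotv y y.
  rewrite lt_neqAle dotv_ge0 andbT eq_sym; apply/eqP => /dotv_eq0 h.
  by rewrite h eqxx in y0.
set t := dotv x y / dotv y y.
have h0 := dotv_ge0 (x - t *: y).
rewrite dotvBl !dotvBr !dotvZl !dotvZr (dotvC y x) in h0.
have : dotv x y ^+ 2 <= dotv x x * dotv y y.
  have e : dotv x x - t * dotv x y - (t * dotv x y - t * (t * dotv y y))
       = dotv x x - dotv x y ^+ 2 / dotv y y.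
    rewrite /t; field. by rewrite gt_eqF.
  rewrite e subr_ge0 ler_pdivrMr // in h0.
move=> h; rewrite -(ger0_norm (enorm_ge0 x)) -(ger0_norm (enorm_ge0 y)) -normrM.
apply: le_trans (ler_norm _) _.
rewrite -ler_sqr ?nnegrE ?normr_ge0 // !real_normK ?num_real //.
by rewrite exprMn !enorm_sqr.
Qed.

Lemma enormD x y : enorm (x + y) <= enorm x + enorm y.
Proof.
rewrite -ler_sqr ?nnegrE ?addr_ge0 ?enorm_ge0 //.
rewrite enorm_sqr dotvDl !dotvDr sqrrD !enorm_sqr (dotvC y x).
have := CS x y; lra.
Qed.

Lemma enorm_mx x : `|x| <= enorm x.
Proof.
have -> : `|x| = mx_norm x by [].
rewrite mx_normrE.
apply: bigmax_le => [|[i j] _]; first exact: enorm_ge0.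
rewrite (ord1 i) /=.
rewrite -(sqrtr_sqr (x ord0 j)); apply: ler_wsqrtr.
exact: coord_le_sum.
Qed.

Lemma mx_enorm x : enorm x <= n%:R * `|x|.
Proof.
rewrite -ler_sqr ?nnegrE ?mulr_ge0 ?enorm_ge0 //.
rewrite enorm_sqr /dotv.
apply: (@le_trans _ _ (\sum_(i < n) `|x| ^+ 2)).
  apply: ler_sum => i _; rewrite -expr2 -real_normK ?num_real //.
  by rewrite lerXn2r ?nnegrE ?normr_ge0 // coord_le_mx.
rewrite sumr_const card_ord exprMn.
rewrite [X in X <= _](_ : _ = n%:R * `|x| ^+ 2); last by rewrite mulr_natl.
rewrite ler_wpM2r ?sqr_ge0 //.
have : (n <= n * n)%N by case: (n) => // m; rewrite leq_pmulr.
by rewrite expr2 -natrM ler_nat.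
Qed.
End Basic.



Section Dist.
Variables (R : realType) (n : nat).
Local Notation vec := 'rV[R]_n.
Implicit Types x y z u v : vec.

Lemma lip_cont (f : vec -> R) (C : R) : 0 < C ->
  (forall x y, `|f x - f y| <= C * `|x - y|) -> continuous f.
Proof.
move=> C0 H x.
apply/(@cvgrPdist_lt _ _ _ (nbhs x) (nbhs_filter x)) => e e0.
have ce : 0 < e / C by rewrite divr_gt0.
have := (@cvgr_dist_lt _ _ _ (nbhs x) (nbhs_filter x) id x (@cvg_id _ (nbhs x)) _ ce).
apply: filterS => y hy.
apply: le_lt_trans (H x y) _.
by rewrite -ltr_pdivlMl // mulrC.
Qed.

Lemma enorm_lip x y : `|enorm x - enorm y| <= enorm (x - y).
Proof.
rewrite ler_norml; apply/andP; split.
  rewrite lerBrDr addrC -lerBrDr opprK.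
  have := enormD (y - x) x; rewrite subrK enormB; lra.
have := enormD (x - y) y; rewrite subrK; lra.
Qed.

Lemma enorm_cont : continuous (@enorm R n).
Proof.
apply: (@lip_cont _ (n%:R + 1)); first by rewrite ltr_wpDl.
move=> x y; apply: le_trans (enorm_lip x y) _.
apply: le_trans (mx_enorm _) _.
by rewrite ler_wpM2r // lerDl.
Qed.

Definition nearest (S : set vec) x p := S p /\ forall q, S q -> enorm (x - p) <= enorm (x - q).

Lemma nearest_ex (S : set vec) x : S !=set0 -> closed S -> exists p, nearest S x p.
Proof.
move=> [x0 Sx0] cS.
set K := S `&` [set q | enorm (x - q) <= enorm (x - x0)].
have cK : compact K.
  apply: bounded_closed_compact.
    exists (`|x| + enorm (x - x0)); split.
      exact: num_real.
    move=> M hM q [_ hq].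
    apply: le_trans (ltW hM).
    have -> : q = x - (x - q) by rewrite opprB addrC subrK.
    apply: le_trans (ler_normB _ _) _.
    by rewrite lerD2l; apply: le_trans (enorm_mx _) hq.
  apply: closedI => //.
  apply: (@closed_comp _ _ _ [set r : R | r <= enorm (x - x0)]).
    move=> q _; apply: continuous_comp; last exact: enorm_cont.
    exact: (continuousB (@cst_continuous _ _ _ _) (@cvg_id _ _)).
  exact: closed_le.
have [p pK pmin] : exists2 p, p \in K & forall q, q \in K -> enorm (x - p) <= enorm (x - q).
  apply: compact_EVT_min => //; first by exists x0; split => /=.
  move=> q; apply: continuous_subspaceT => r.
  apply: continuous_comp; last exact: enorm_cont.
  exact: (continuousB (@cst_continuous _ _ _ _) (@cvg_id _ _)).
move: pK; rewrite inE => -[Sp hp].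
exists p; split => // q Sq.
have [hq|hq] := leP (enorm (x - q)) (enorm (x - x0)).
  by apply: pmin; rewrite inE.
exact: le_trans hp (ltW hq).
Qed.

Lemma projS_nearest (S : set vec) x : S !=set0 -> closed S -> nearest S x (projS S x).
Proof. by move=> S0 cS; apply: xgetPex; apply: nearest_ex. Qed.

Lemma dist_ge0 (S : set vec) x : 0 <= dist S x.
Proof. exact: enorm_ge0. Qed.

Lemma dist0 (S : set vec) x : S x -> dist S x = 0.
Proof.
move=> Sx; rewrite /dist /projS.
set P := [set p | S p /\ _].
have [[p Pp]|nP] := pselect (exists p, P p).
  have [_ h] := xgetPex x (ex_intro _ p Pp).
  apply/eqP; rewrite eq_le enorm_ge0 andbT.
  by have := h x Sx; rewrite subrr enorm0.
by rewrite xgetPN ?subrr ?enorm0 // => q Pq; apply: nP; exists q.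
Qed.

Lemma dist_le (S : set vec) x q : S !=set0 -> closed S -> S q -> dist S x <= enorm (x - q).
Proof. by move=> S0 cS Sq; have [_ h] := projS_nearest x S0 cS; apply: h. Qed.

Lemma dist_lip (S : set vec) x y : S !=set0 -> closed S -> dist S x <= enorm (x - y) + dist S y.
Proof.
move=> S0 cS; have [Sp _] := projS_nearest y S0 cS.
apply: le_trans (dist_le x S0 cS Sp) _.
rewrite /dist; have -> : x - projS S y = (x - y) + (y - projS S y) by rewrite addrA subrK.
exact: enormD.
Qed.

Lemma dist_cont (S : set vec) : S !=set0 -> closed S -> continuous (dist S).
Proof.
move=> S0 cS; apply: (@lip_cont _ (n%:R + 1)); first by rewrite ltr_wpDl.
move=> x y; apply: (@le_trans _ _ (enorm (x - y))).
  rewrite ler_norml; apply/andP; split.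
    have := dist_lip y x S0 cS; rewrite enormB; lra.
  have := dist_lip x y S0 cS; lra.
apply: le_trans (mx_enorm _) _.
by rewrite ler_wpM2r // lerDl.
Qed.

End Dist.



Section Convex.
Variables (R : realType) (n : nat).
Local Notation vec := 'rV[R]_n.
Implicit Types x y z u v : vec.

Lemma convex_seg (S : set vec) a p t : convex_set S -> S a -> S p -> 0 <= t <= 1 ->
  S (p + t *: (a - p)).
Proof.
move=> cS Sa Sp /andP[t0 t1].
have := cS a p (Itv01 t0 t1); rewrite !inE => /(_ Sa Sp).
congr S => /=.
by rewrite /conv /= /unstable.onem scalerBl scale1r scalerBr addrCA.
Qed.

Lemma var_key (w e : vec) :
  (forall t, 0 < t -> t <= 1 -> dotv w w <= dotv (w - t *: e) (w - t *: e)) ->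
  dotv w e <= 0.
Proof.
move=> H; set c := dotv w e; set D := dotv e e.
have D0 : 0 <= D by apply: dotv_ge0.
rewrite leNgt; apply/negP => c0.
set t := c / (c + D).
have cD : 0 < c + D by rewrite ltr_wpDr.
have t0 : 0 < t by rewrite divr_gt0.
have t1 : t <= 1 by rewrite ler_pdivrMr // mul1r lerDl.
have := H t t0 t1.
rewrite dotvBl !dotvBr !dotvZl !dotvZr (dotvC e) -/c -/D => h.
have h2 : 2 * c <= t * D.
  have : t * (2 * c) <= t * (t * D) by lra.
  by rewrite ler_pM2l.
have : t * D <= c.
  rewrite /t mulrAC ler_pdivrMr //.
  by apply: ler_wpM2l; [exact: ltW | lra].
lra.
Qed.

Lemma var_ineq (S : set vec) z a : S !=set0 -> closed S -> convex_set S -> S a ->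
  dotv (z - projS S z) (a - projS S z) <= 0.
Proof.
move=> S0 cS cvS Sa; set p := projS S z.
have [Sp pmin] := projS_nearest z S0 cS; rewrite -/p in Sp pmin.
apply: var_key => t t0 t1.
have := pmin _ (convex_seg cvS Sa Sp (introT andP (conj (ltW t0) t1))).
rewrite -(ler_sqr (enorm_ge0 _) (enorm_ge0 _)) !enorm_sqr.
by have -> : z - (p + t *: (a - p)) = (z - p) - t *: (a - p) by rewrite opprD addrA.
Qed.

Lemma nonexp_key (w e : vec) : dotv w e <= 0 -> dotv e e <= dotv (w - e) (w - e).
Proof. by rewrite dotvBl !dotvBr (dotvC e w); have := dotv_ge0 w; lra. Qed.

Lemma proj_nonexp (S : set vec) z a : S !=set0 -> closed S -> convex_set S -> S a ->
  enorm (projS S z - a) <= enorm (z - a).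
Proof.
move=> S0 cS cvS Sa; have h := var_ineq z S0 cS cvS Sa.
rewrite -(ler_sqr (enorm_ge0 _) (enorm_ge0 _)) !enorm_sqr.
have -> : z - a = (z - projS S z) - (a - projS S z) by rewrite opprB addrA subrK.
have -> : projS S z - a = - (a - projS S z) by rewrite opprB.
rewrite dotvNl dotvNr opprK.
move: h; move: (z - projS S z) (a - projS S z) => w e.
exact: nonexp_key.
Qed.

Lemma mono_key (u w d : vec) : dotv u w <= 0 -> dotv (u + d - w) (- w) <= 0 ->
  dotv w d <= dotv d d.
Proof.
rewrite dotvNr !dotvBl !dotvDl => h1 h2.
have h3 := dotv_ge0 (d - w).
rewrite dotvBl !dotvBr (dotvC w d) in h3.
rewrite (dotvC w d); lra.
Qed.

Lemma proj_mono (S : set vec) y d : S !=set0 -> closed S -> convex_set S ->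
  dotv (projS S (y + d) - projS S y) d <= dotv d d.
Proof.
move=> S0 cS cvS.
have [S1 _] := projS_nearest y S0 cS.
have [S2 _] := projS_nearest (y + d) S0 cS.
have h1 := var_ineq y S0 cS cvS S2.
have h2 := var_ineq (y + d) S0 cS cvS S1.
have e1 : y + d - projS S (y + d) = (y - projS S y) + d - (projS S (y + d) - projS S y).
  by rewrite opprB addrA; congr (_ - _); rewrite addrAC subrK.
have e2 : projS S y - projS S (y + d) = - (projS S (y + d) - projS S y) by rewrite opprB.
rewrite e1 e2 in h2.
move: h1 h2; move: (y - projS S y) (projS S (y + d) - projS S y) => u w.
exact: mono_key.
Qed.

End Convex.




Section CaseI.
Variables (R : realType) (n : nat).
Local Notation vec := 'rV[R]_n.
Implicit Types x y z u v : vec.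

Lemma Vkey (u w d : vec) :
  dotv (u + d - w) (u + d - w) <= dotv (u + d) (u + d) ->
  dotv u u <= dotv (u - w) (u - w) ->
  dotv w d <= dotv d d ->
  `|2^-1 * dotv (u + d - w) (u + d - w) - 2^-1 * dotv u u - dotv u d| <= 2^-1 * dotv d d.
Proof.
rewrite !(dotvBl, dotvBr, dotvDl, dotvDr) (dotvC w u) (dotvC d u) (dotvC d w).
move=> h1 h2 h3; rewrite ler_norml; apply/andP; split; lra.
Qed.

Lemma Vi_bound (A : set vec) y d : A !=set0 -> closed A -> convex_set A ->
  `|2^-1 * enorm (y + d - projS A (y + d)) ^+ 2 - 2^-1 * enorm (y - projS A y) ^+ 2
     - dotv (y - projS A y) d| <= 2^-1 * dotv d d.
Proof.
move=> A0 cA cvA.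
have [AP hP] := projS_nearest y A0 cA.
have [AQ hQ] := projS_nearest (y + d) A0 cA.
have h3 := proj_mono y d A0 cA cvA.
have h1 := hQ _ AP; have h2 := hP _ AQ.
rewrite -(ler_sqr (enorm_ge0 _) (enorm_ge0 _)) in h1.
rewrite -(ler_sqr (enorm_ge0 _) (enorm_ge0 _)) in h2.
move: h1 h2 h3; rewrite !enorm_sqr.
have e1 : y + d - projS A (y + d) = (y - projS A y) + d - (projS A (y + d) - projS A y).
  by rewrite opprB addrA; congr (_ - _); rewrite addrAC subrK.
have e2 : y + d - projS A y = (y - projS A y) + d by rewrite addrAC.
have e3 : y - projS A (y + d) = (y - projS A y) - (projS A (y + d) - projS A y).
  by rewrite opprB addrA subrK.
rewrite e1 e2 e3.
move: (y - projS A y) (projS A (y + d) - projS A y) => u w.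
exact: Vkey.
Qed.

Lemma grad_caseI (A : set vec) y : A !=set0 -> closed A -> convex_set A ->
  grad (fun y => 2^-1 * enorm (y - projS A y) ^+ 2) y = y - projS A y.
Proof.
move=> A0 cA cvA; apply/rowP => i; rewrite mxE.
set V := fun y => _.
set c := (y - projS A y) ord0 i.
set e := delta_mx ord0 i : vec.
have ee : dotv e e = 1 by rewrite /e dotv_delta mxE !eqxx.
have ue : dotv (y - projS A y) e = c by rewrite dotv_delta.
rewrite /derive; apply: cvg_lim => //.
apply/(@cvgrPdist_le _ _ _ _ (dnbhs_filter 0)) => eps eps0.
have eps2 : 0 < 2 * eps by rewrite mulr_gt0.
near=> h.
have hne : h != 0 by near: h; exact: nbhs_dnbhs_neq.
have hlt : `|h| < 2 * eps by near: h; exact: dnbhs0_lt.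
have := Vi_bound y (h *: e) A0 cA cvA.
rewrite dotvZl !dotvZr ee ue mulr1 (addrC y).
rewrite /V.
move=> hb.
have -> : c - h^-1 *: (V (h *: e + y) - V y) = - h^-1 * (V (h *: e + y) - V y - h * c).
  rewrite /GRing.scale /=. field. exact: hne.
rewrite normrM normrN normfV.
rewrite ler_pdivrMl ?normr_gt0 //.
apply: le_trans hb _.
have hh : h * h = `|h| * `|h| by rewrite -normrM ger0_norm // -expr2 sqr_ge0.
rewrite hh.
have : `|h| * `|h| <= `|h| * (2 * eps) by rewrite ler_wpM2l // ltW.
rewrite mulrCA; lra.
Unshelve. all: by end_near.
Qed.

End CaseI.



Section CaseII.
Variables (R : realType) (n : nat).
Local Notation vec := 'rV[R]_n.
Implicit Types x y z u v : vec.

Lemma deriv_grad (V : vec -> R) y d : differentiable V y ->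
  'D_d V y = dotv (grad V y) d.
Proof.
move=> dV.
have hd : d = \sum_(i < n) d ord0 i *: delta_mx ord0 i.
  apply/rowP => j; rewrite summxE (bigD1 j) //= big1 ?addr0.
    by rewrite !mxE !eqxx mulr1.
  by move=> k kj; rewrite !mxE [j == k]eq_sym (negbTE kj) andbF mulr0.
rewrite [in LHS]hd deriveE // linear_sum /dotv; apply: eq_bigr => i _.
by rewrite linearZ /= mxE -deriveE // mulrC.
Qed.

Lemma mvt_V (V : vec -> R) y d : (forall x, differentiable V x) ->
  exists2 c : R, 0 <= c <= 1 & V (y + d) - V y = dotv (grad V (c *: d + y)) d.
Proof.
move=> dV.
pose g := fun t : R => V (t *: d + y).
have gder : forall t : R, is_derive t (1:R) g ('D_d V (t *: d + y)).
  move=> t.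
  have e : (fun h : R => h^-1 *: ((g \o shift t) h%:A - g t)) =
           (fun h : R => h^-1 *: ((V \o shift (t *: d + y)) (h *: d) - V (t *: d + y))).
    apply/funext => h; rewrite /= /g; congr (_ *: (V _ - _)).
    have -> : h%:A + t = h + t by rewrite /GRing.scale /= mulr1.
    by rewrite scalerDl addrA.
  split; rewrite /derivable /derive e //.
  exact: diff_derivable.
have gc : {within `[0, 1], continuous g}.
  apply: continuous_subspaceT => t.
  apply: continuous_comp; last exact: differentiable_continuous.
  apply: continuousD; last exact: cst_continuous.
  exact: scalel_continuous.
have [c c01 hc] := MVT_segment ler01 (fun t _ => gder t) gc.
exists c; first by move: c01; rewrite in_itv.
move: hc; rewrite /g scale1r scale0r add0r subr0 mulr1 (addrC d y) => ->.
exact: deriv_grad.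
Qed.

End CaseII.



Section HC.
Variables (R : realType) (n : nat).
Local Notation vec := 'rV[R]_n.
Implicit Types x y z u v : vec.

Lemma cont_ball (f : vec -> vec) x eta : continuous f -> 0 < eta ->
  exists2 r, 0 < r & forall z, `|x - z| < r -> `|f x - f z| < eta.
Proof.
move=> cf e0.
have := (@cvgr_dist_lt _ _ _ (nbhs x) (nbhs_filter x) f (f x) (cf x) _ e0).
move=> /nbhs_ballP[r r0 hr]; exists r => // z hz.
by apply: hr; rewrite -ball_normE.
Qed.

Lemma unif_cont (f : vec -> vec) (K : set vec) : compact K -> continuous f ->
  forall eta, 0 < eta -> exists2 delta, 0 < delta &
    forall y z, K y -> `|z - y| < delta -> `|f z - f y| < eta.
Proof.
move=> cK cf eta eta0.
pose P (k : nat) (y : vec) := forall z, `|z - y| < k.+1%:R^-1 -> `|f z - f y| < eta.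
have : \forall k \near \oo, K `<=` P k.
  apply: (proj1 (compact_near_coveringP K) cK nat \oo P) => x Kx.
  have eta2 : 0 < eta / 2 by rewrite divr_gt0.
  have [r r0 hr] := cont_ball x cf eta2.
  have r2 : 0 < r / 2 by rewrite divr_gt0.
  have [N hN] : exists N : nat, N.+1%:R^-1 < r / 2.
    exists (Num.truncn (r / 2)^-1); rewrite invf_plt ?posrE //.
    by rewrite truncnS_gt.
  exists ([set x' | `|x - x'| < r / 2], [set k | (N <= k)%N]); first split.
  - exact: (@cvgr_dist_lt _ _ _ (nbhs x) (nbhs_filter x) id x (@cvg_id _ (nbhs x)) _ r2).
  - by exists N.
  move=> [x' k] [/= h1 h2] z hz.
  have h3 : `|x - z| < r.
    have -> : x - z = (x - x') + (x' - z) by rewrite addrA subrK.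
    apply: le_lt_trans (ler_normD _ _) _.
    have : `|x' - z| < r / 2.
      rewrite distrC; apply: lt_le_trans hz _.
      apply: le_trans (ltW hN).
      by rewrite lef_pV2 ?posrE // ler_nat.
    lra.
  have h4 : `|x - x'| < r by apply: lt_trans h1 _; rewrite ltr_pdivrMr // ltr_pMr // ltr1n.
  have := hr _ h3; have := hr _ h4.
  have -> : f z - f x' = (f x - f x') - (f x - f z) by rewrite opprB [RHS]addrC [RHS]addrA subrK.
  move=> a b; apply: le_lt_trans (ler_normB _ _) _; lra.
move=> [N _ HN].
exists N.+1%:R^-1; first by rewrite invr_gt0 ltr0n.
move=> y z Ky hz; exact: (HN N (leqnn N) y Ky z hz).
Qed.


End HC.



Section Core.
Variables (R : realType) (n : nat).
Local Notation vec := 'rV[R]_n.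
Implicit Types x y z u v : vec.

Lemma compact_closedA (A : set vec) : compact A -> closed A.
Proof. by move=> cA; apply: compact_closed => //; exact: norm_hausdorff. Qed.

Lemma A_bounded (A : set vec) : compact A -> exists M, forall a, A a -> `|a| <= M.
Proof.
move=> /compact_bounded [M [_ hM]]; exists (M + 1) => a Aa.
by apply: (hM (M + 1)) => //; rewrite ltrDl.
Qed.

Lemma cball_compact (A : set vec) r : A !=set0 -> compact A -> compact (cball r A).
Proof.
move=> A0 cA; have clA := compact_closedA cA.
have [M hM] := A_bounded cA.
apply: bounded_closed_compact.
  exists (M + r); split; first exact: num_real.
  move=> N hN x hx; apply: le_trans (ltW hN).
  have [Ap _] := projS_nearest x A0 clA.
  have -> : x = projS A x + (x - projS A x) by rewrite addrC subrK.
  apply: le_trans (ler_normD _ _) _.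
  apply: lerD; first exact: hM.
  apply: le_trans (enorm_mx _) _; exact: hx.
apply: (@closed_comp _ _ _ [set t : R | t <= r]).
  by move=> q _; exact: dist_cont.
exact: closed_le.
Qed.

Lemma A_sub_cball (A : set vec) r : 0 <= r -> A `<=` cball r A.
Proof. by move=> r0 a Aa; rewrite /cball /= dist0. Qed.

Lemma Vsup (A : set vec) (V : vec -> R) r : A !=set0 -> compact A -> continuous V -> 0 <= r ->
  exists Q, forall y, dist A y <= r -> V y <= Q.
Proof.
move=> A0 cA cV r0.
have [c _ hc] : exists2 c, c \in cball r A & forall t, t \in cball r A -> V t <= V c.
  apply: compact_EVT_max; first by case: A0 => a Aa; exists a; apply: A_sub_cball.
    exact: cball_compact.
  by move=> q; apply: continuous_subspaceT => z; exact: cV.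
by exists (V c) => y hy; apply: hc; rewrite inE.
Qed.

Lemma rad_le (A Xi : set vec) (V : vec -> R) B : rad_unb_on A Xi V ->
  exists2 r, 0 < r & forall x, Xi x -> V x <= B -> dist A x <= r.
Proof.
move=> /(_ B) [r [r0 hr]]; exists r => // x Xx hV.
have [//|lt] := leP (dist A x) r.
have : B < V x by apply: hr => //; rewrite /cball /= leNgt lt.
lra.
Qed.


Lemma key_lemma (A Xi : set vec) (V : vec -> R) (s : vec -> vec) (g : vec -> R) (eps0 b Q : R) :
  A !=set0 -> compact A -> closed Xi ->
  (forall y, 0 <= V y) -> continuous V ->
  rad_unb_on A Xi V ->
  (forall alpha y, 0 < alpha -> Xi y -> Xi (projS Xi (y - alpha *: s y))) ->
  (forall r eta, 0 < r -> 0 < eta -> exists2 a0, 0 < a0 & forall alpha y, 0 < alpha -> alpha <= a0 ->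
       Xi y -> dist A y <= r ->
       V (projS Xi (y - alpha *: s y)) <= V y - alpha * g y + alpha * eta) ->
  0 <= eps0 -> 0 <= b ->
  (forall y, Xi y -> dist A y <= eps0 -> - b <= g y) ->
  (forall sigma, eps0 < sigma -> exists phi : vec -> R, continuous phi /\
      forall y, Xi y -> dist A y <= sigma -> ~ (dist A y < eps0) -> 0 < phi y /\ phi y <= g y) ->
  (forall y, dist A y <= eps0 + 1 -> V y <= Q) ->
  forall sigma, exists2 alpha, 0 < alpha & exists T : nat, forall y : nat -> vec,
    trajectory Xi s alpha y -> dist A (y 0%N) <= sigma ->
    (forall t, Xi (y t)) /\
    (V (y 0%N) <= Q + 1 -> forall t, V (y t) <= Q + 1) /\
    (forall t, (T <= t)%N -> V (y t) <= Q + 1).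
Proof.
move=> A0 cA cXi V0 cV rad XiP desc eps00 b0 hb hphi hQ sigma.
have i2 : (0:R) < 2^-1 by rewrite invr_gt0 ltr0n.
have i2b : (2^-1 : R) < 1 by rewrite invf_lt1 ?ltr0n // ltr1n.
set s1 := Num.max sigma (eps0 + 1).
have s10 : 0 <= s1 by rewrite le_max; apply/orP; right; lra.
have [W0 hW0] := Vsup A0 cA cV s10.
set W := Num.max W0 Q.
have hW : forall y, dist A y <= s1 -> V y <= W.
  by move=> y hy; rewrite le_max (hW0 y hy).
have QW : Q <= W by rewrite le_max lexx orbT.
have [r2 r20 hr2] := rad_le (W + 1) rad.
set s' := r2 + eps0 + 1.
have [phi [cphi hphi']] := hphi s' ltac:(rewrite /s'; lra).
have farQ : forall y, Q < V y -> eps0 + 1 < dist A y.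
  move=> y hy; rewrite ltNge; apply/negP => /hQ; lra.
set K := cball r2 A `&` (Xi `&` [set y | Q + 2^-1 <= V y]).
have cK : compact K.
  apply: compact_closedI; first exact: cball_compact.
  apply: closedI => //.
  apply: (@closed_comp _ _ _ [set t : R | Q + 2^-1 <= t]); first by move=> q _; exact: cV.
  exact: closed_ge.
have Kphi : forall y, K y -> 0 < phi y /\ phi y <= g y.
  move=> y [hy [Xy Vy]]; apply: hphi' => //.
    rewrite /s'; move: hy; rewrite /cball /=; lra.
  have hQy : Q < V y by move: Vy => /= Vy; lra.
  have := farQ y hQy; lra.
have [m m0 hm] : exists2 m, 0 < m & forall y, K y -> m <= phi y.
  have [[y0 Ky0]|K0] := pselect (K !=set0).
    have [c cK' hc] : exists2 c, c \in K & forall t, t \in K -> phi c <= phi t.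
      apply: compact_EVT_min => //; first by exists y0.
      by move=> q; apply: continuous_subspaceT => z; exact: cphi.
    move: cK'; rewrite inE => Kc.
    exists (phi c); first by case: (Kphi c Kc).
    by move=> y Ky; apply: hc; rewrite inE.
  by exists 1 => // y Ky; exfalso; apply: K0; exists y.
have eta0 : 0 < m / 2 by rewrite divr_gt0.
have [a0 a00 ha0] := desc r2 (m / 2) r20 eta0.
have bm : 0 < b + m / 2 by lra.
set alpha := Num.min a0 (2^-1 / (b + m / 2)).
have al0 : 0 < alpha by rewrite lt_min a00 divr_gt0.
have ala0 : alpha <= a0 by rewrite ge_min lexx.
have alb : alpha * (b + m / 2) <= 2^-1.
  have : alpha <= 2^-1 / (b + m / 2) by rewrite ge_min lexx orbT.
  by rewrite ler_pdivlMr.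
have alm : 0 <= alpha * (m / 2) by rewrite mulr_ge0 // ltW.
have step : forall y, Xi y -> V y <= W + 1 ->
    Xi (projS Xi (y - alpha *: s y)) /\
    (Q + 2^-1 <= V y -> V (projS Xi (y - alpha *: s y)) <= V y - alpha * (m / 2)) /\
    (V y < Q + 2^-1 -> V (projS Xi (y - alpha *: s y)) <= Q + 1).
  move=> y Xy Vy.
  have dy := hr2 y Xy Vy.
  have hd := ha0 alpha y al0 ala0 Xy dy.
  split; first exact: XiP.
  split.
    move=> hV.
    have Ky : K y by split => //.
    have [_ pg] := Kphi y Ky.
    have hmy := hm y Ky.
    have : alpha * m <= alpha * g y.
      by apply: ler_wpM2l; [exact: ltW | exact: le_trans hmy pg].
    move: hd; set P := V _.
    have e : alpha * m = alpha * (m / 2) + alpha * (m / 2) by rewrite -mulrDr -splitr.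
    lra.
  move=> hV.
  have [de|de] := leP (dist A y) eps0.
    have hby := hb y Xy de.
    have : alpha * (- b) <= alpha * g y by apply: ler_wpM2l; [exact: ltW | exact: hby].
    move: hd alb; set P := V _.
    rewrite mulrDr mulrN; lra.
  have [ph pg] := hphi' y Xy ltac:(rewrite /s'; lra) ltac:(rewrite ltNge (ltW de) //).
  have : 0 <= alpha * g y by rewrite mulr_ge0 // ltW //; apply: lt_le_trans pg.
  move: hd alb; set P := V _.
  rewrite mulrDr; have := mulr_ge0 (ltW al0) b0; lra.
have T0 : 0 < alpha * (m / 2) by rewrite mulr_gt0.
exists alpha => //.
exists (Num.truncn (W / (alpha * (m / 2)))).+1.
move=> y [Xy0 hy] dy0.
have V0W : V (y 0%N) <= W by apply: hW; apply: le_trans dy0 _; rewrite le_max lexx.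
have inv : forall t, Xi (y t) /\ V (y t) <= W + 1.
  elim => [|t [Xt Vt]]; first by split => //; lra.
  have [Xt' [h1 h2]] := step _ Xt Vt.
  rewrite hy; split => //.
  have [c|c] := leP (Q + 2^-1) (V (y t)).
    have := h1 c; lra.
  have := h2 c; lra.
split; first by move=> t; case: (inv t).
split.
  move=> h0; elim => [//|t IH].
  have [Xt Vt] := inv t.
  have [_ [h1 h2]] := step _ Xt Vt.
  rewrite hy.
  have [c|c] := leP (Q + 2^-1) (V (y t)).
    have := h1 c; lra.
  exact: h2 c.
have dec : forall k, V (y k) <= Q + 1 \/ V (y k) <= W - k%:R * (alpha * (m / 2)).
  elim => [|k IH]; first by right; rewrite mul0r subr0.
  have [Xk Vk] := inv k.
  have [_ [h1 h2]] := step _ Xk Vk.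
  rewrite hy.
  have [c|c] := leP (Q + 2^-1) (V (y k)).
    case: IH => IH.
      left; have := h1 c; lra.
    right; have := h1 c; rewrite -[k.+1%:R]natr1 mulrDl mul1r; lra.
  by left; exact: h2 c.
move=> t Tt.
case: (dec t) => // h; exfalso.
have := V0 (y t).
have : W < t%:R * (alpha * (m / 2)).
  rewrite -ltr_pdivrMr //.
  apply: lt_le_trans (truncnS_gt _) _.
  by rewrite ler_nat.
lra.
Qed.


Lemma core_SPAS (A Xi : set vec) (V : vec -> R) (s : vec -> vec) (g : vec -> R) (eps0 b : R) :
  A !=set0 -> compact A -> closed Xi ->
  (forall y, 0 <= V y) -> continuous V ->
  rad_unb_on A Xi V ->
  (forall alpha y, 0 < alpha -> Xi y -> Xi (projS Xi (y - alpha *: s y))) ->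
  (forall r eta, 0 < r -> 0 < eta -> exists2 a0, 0 < a0 & forall alpha y, 0 < alpha -> alpha <= a0 ->
       Xi y -> dist A y <= r ->
       V (projS Xi (y - alpha *: s y)) <= V y - alpha * g y + alpha * eta) ->
  0 <= eps0 -> 0 <= b ->
  (forall y, Xi y -> dist A y <= eps0 -> - b <= g y) ->
  (forall sigma, eps0 < sigma -> exists phi : vec -> R, continuous phi /\
      forall y, Xi y -> dist A y <= sigma -> ~ (dist A y < eps0) -> 0 < phi y /\ phi y <= g y) ->
  SPAS A Xi s.
Proof.
move=> A0 cA cXi V0 cV rad XiP desc eps00 b0 hb hphi.
have e10 : 0 <= eps0 + 1 by lra.
have [Q hQ] := Vsup A0 cA cV e10.
have KL := key_lemma A0 cA cXi V0 cV rad XiP desc eps00 b0 hb hphi hQ.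
have [r1 r10 hr1] := rad_le (Q + 1) rad.
have rc0 : 0 < r1 + eps0 + 1 by lra.
split.
  exists (r1 + eps0 + 1); split => // rho hrho.
  have [alpha al0 [T HT]] := KL (eps0 + 1).
  exists (eps0 + 1); split; first lra.
  exists [set alpha]; split; first by exists alpha.
  split; first by move=> a ->.
  move=> a y -> tr dy0 t.
  have [HX [HI _]] := HT y tr dy0.
  have hQ0 : V (y 0%N) <= Q + 1 by have := hQ _ dy0; lra.
  have Vt := HI hQ0 t.
  split; last exact: HX.
  rewrite /cball /=; have := hr1 _ (HX t) Vt; lra.
exists (r1 + eps0 + 1); split => // sigma rho hrho hsig.
have [alpha al0 [T HT]] := KL sigma.
exists [set alpha]; split; first by exists alpha.
split; first by move=> a ->.
move=> a -> eps eps0' _; exists T => y tr dy0 t Tt.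
have [HX [_ H3]] := HT y tr dy0.
have := hr1 _ (HX t) (H3 t Tt) => dt.
rewrite /cball /= dist0 ?ltW //.
rewrite /cball /=; lra.
Qed.

End Core.



Section Final.
Variables (R : realType) (n : nat).
Local Notation vec := 'rV[R]_n.
Implicit Types x y z u v : vec.

Lemma projS_setT z : projS (@setT vec) z = z.
Proof.
have T0 : (@setT vec) !=set0 by exists z.
have [_ h] := projS_nearest z T0 closedT.
have := h z I; rewrite subrr enorm0 => h0.
have : enorm (z - projS setT z) = 0 by apply/eqP; rewrite eq_le h0 enorm_ge0.
by move=> /enorm_eq0 /eqP; rewrite subr_eq0 => /eqP <-.
Qed.

Lemma s_bounded (A Xi : set vec) (s : vec -> vec) : A !=set0 -> compact A -> A `<=` Xi ->
  (forall sigma : R, 0 < sigma -> exists L : R, 0 < L /\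
     forall y1 y2, Xi y1 -> cball sigma A y1 -> Xi y2 -> cball sigma A y2 ->
       enorm (s y1 - s y2) <= L * enorm (y1 - y2)) ->
  forall r, 0 < r -> exists2 M, 0 <= M & forall y, Xi y -> dist A y <= r -> enorm (s y) <= M.
Proof.
move=> [a0 Aa0] cA AXi Hl r r0.
have A0 : A !=set0 by exists a0.
have clA := compact_closedA cA.
have [L [L0 HL]] := Hl r r0.
have [Mb hMb] := A_bounded cA.
have Mb0 : 0 <= Mb by apply: le_trans (hMb _ Aa0); exact: normr_ge0.
exists (enorm (s a0) + L * (r + n%:R * (Mb + Mb))).
  apply: addr_ge0; first exact: enorm_ge0.
  apply: mulr_ge0; first exact: ltW.
  by apply: addr_ge0; [exact: ltW | apply: mulr_ge0 => //; exact: addr_ge0].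
move=> y Xy dy.
have da0 : cball r A a0 by rewrite /cball /= dist0 ?ltW.
have h1 := HL y a0 Xy dy (AXi _ Aa0) da0.
have h2 : enorm (s y) <= enorm (s a0) + enorm (s y - s a0).
  by have := enormD (s a0) (s y - s a0); rewrite addrC subrK addrC.
have [Ap _] := projS_nearest y A0 clA.
have h3 : enorm (y - a0) <= r + n%:R * (Mb + Mb).
  have -> : y - a0 = (y - projS A y) + (projS A y - a0) by rewrite addrA subrK.
  apply: le_trans (enormD _ _) _; apply: lerD; first exact: dy.
  apply: le_trans (mx_enorm _) _; apply: ler_wpM2l => //.
  apply: le_trans (ler_normB _ _) _; apply: lerD; exact: hMb.
have : L * enorm (y - a0) <= L * (r + n%:R * (Mb + Mb)) by apply: ler_wpM2l => //; exact: ltW.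
lra.
Qed.


Lemma desc_caseI (A Xi : set vec) (s : vec -> vec) :
  A !=set0 -> compact A -> convex_set A -> Xi !=set0 -> closed Xi -> convex_set Xi ->
  A `<=` Xi ->
  (forall sigma : R, 0 < sigma -> exists L : R, 0 < L /\
     forall y1 y2, Xi y1 -> cball sigma A y1 -> Xi y2 -> cball sigma A y2 ->
       enorm (s y1 - s y2) <= L * enorm (y1 - y2)) ->
  forall r eta, 0 < r -> 0 < eta -> exists2 a0, 0 < a0 & forall alpha y, 0 < alpha -> alpha <= a0 ->
     Xi y -> dist A y <= r ->
     (fun y => 2^-1 * enorm (y - projS A y) ^+ 2) (projS Xi (y - alpha *: s y)) <=
     (fun y => 2^-1 * enorm (y - projS A y) ^+ 2) y
       - alpha * dotv (grad (fun y => 2^-1 * enorm (y - projS A y) ^+ 2) y) (s y) + alpha * eta.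
Proof.
move=> A0 cA cvA Xi0 cXi cvXi AXi Hl r eta r0 eta0.
have clA := compact_closedA cA.
have [M M0 hM] := s_bounded A0 cA AXi Hl r0.
have MM0 : 0 < M * M + 1 by rewrite ltr_wpDl // mulr_ge0.
exists (2 * eta / (M * M + 1)); first by rewrite divr_gt0 // mulr_gt0.
move=> alpha y al0 ala Xy dy /=.
rewrite grad_caseI //.
set z := y - alpha *: s y.
set p := projS Xi z.
have hd : dist A p <= dist A z.
  have [Az _] := projS_nearest z A0 clA.
  apply: le_trans (dist_le p A0 clA Az) _.
  by rewrite /dist; apply: proj_nonexp => //; exact: AXi.
have hV1 : 2^-1 * enorm (p - projS A p) ^+ 2 <= 2^-1 * enorm (z - projS A z) ^+ 2.
  rewrite ler_pM2l ?invr_gt0 ?ltr0n //.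
  by rewrite ler_sqr ?nnegrE ?enorm_ge0.
have hb := Vi_bound y (- (alpha *: s y)) A0 clA cvA.
rewrite -/z in hb.
move: hb; rewrite dotvNl dotvNr dotvZl dotvZr opprK dotvNr dotvZr => hb.
have hs : dotv (s y) (s y) <= M * M.
  by rewrite -enorm_sqr expr2; apply: ler_pM; rewrite ?enorm_ge0 ?hM.
have h1 : alpha * (M * M + 1) <= 2 * eta by rewrite -ler_pdivlMr.
have h2 : alpha * (alpha * dotv (s y) (s y)) <= alpha * (alpha * (M * M)).
  by apply: ler_wpM2l; [exact: ltW | apply: ler_wpM2l; [exact: ltW | exact: hs]].
have h3 : alpha * (alpha * (M * M)) <= alpha * (2 * eta).
  apply: ler_wpM2l; first exact: ltW.
  have : alpha * (M * M) <= alpha * (M * M + 1) by apply: ler_wpM2l; [exact: ltW | lra].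
  lra.
move: hb; rewrite ler_norml => /andP[_ hb].
rewrite mulrCA in h3.
have i2 : (0:R) < 2^-1 by rewrite invr_gt0 ltr0n.
have e2 : 2^-1 * (alpha * (2 * eta)) = alpha * eta by field.
have h4 : 2^-1 * (alpha * (alpha * dotv (s y) (s y))) <= alpha * eta.
  rewrite -e2 ler_pM2l //; apply: le_trans h2 _; rewrite mulrCA; exact: h3.
lra.
Qed.


Lemma desc_caseII (A : set vec) (V : vec -> R) (s : vec -> vec) :
  A !=set0 -> compact A -> C1_loc_lip_grad V ->
  (forall sigma : R, 0 < sigma -> exists L : R, 0 < L /\
     forall y1 y2, setT y1 -> cball sigma A y1 -> setT y2 -> cball sigma A y2 ->
       enorm (s y1 - s y2) <= L * enorm (y1 - y2)) ->
  forall r eta, 0 < r -> 0 < eta -> exists2 a0, 0 < a0 & forall alpha y, 0 < alpha -> alpha <= a0 ->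
     setT y -> dist A y <= r ->
     V (projS setT (y - alpha *: s y)) <= V y - alpha * dotv (grad V y) (s y) + alpha * eta.
Proof.
move=> A0 cA [dV [cg _]] Hl r eta r0 eta0.
have [M M0 hM] := s_bounded A0 cA (@subsetT _ A) Hl r0.
have nM0 : 0 < n%:R * M + 1 by rewrite ltr_wpDl // mulr_ge0.
set eta' := eta / (n%:R * M + 1).
have eta'0 : 0 < eta' by rewrite divr_gt0.
have [de de0 hde] := unif_cont (cball_compact (r:=r) A0 cA) cg eta'0.
have M10 : 0 < M + 1 by lra.
exists (de / (M + 1)); first by rewrite divr_gt0.
move=> alpha y al0 ala _ dy.
rewrite projS_setT.
have [c /andP[c0 c1] hc] := mvt_V y (- (alpha *: s y)) dV.
have hs : `|s y| <= M by apply: le_trans (enorm_mx _) (hM _ I dy).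
have hxi : `|c *: - (alpha *: s y) + y - y| < de.
  rewrite addrK normrZ normrN normrZ (ger0_norm c0) (gtr0_norm al0).
  apply: le_lt_trans (_ : 1 * (alpha * M) < de).
    by apply: ler_pM => //; [exact: mulr_ge0 (ltW al0) (normr_ge0 _) | apply: ler_wpM2l => //; exact: ltW].
  rewrite mul1r.
  apply: le_lt_trans (_ : de / (M + 1) * M < de).
    by apply: ler_wpM2r.
  by rewrite mulrAC ltr_pdivrMr // ltr_pM2l // ltrDl.
have hD := hde y _ dy hxi.
move: hD hc; set xi := c *: - (alpha *: s y) + y => hD hc.
have e1 : dotv (grad V xi) (- (alpha *: s y)) =
    - (alpha * dotv (grad V y) (s y)) - alpha * dotv (grad V xi - grad V y) (s y).
  by rewrite dotvNr dotvZr dotvBl; ring.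
have hb : `|dotv (grad V xi - grad V y) (s y)| <= n%:R * (eta' * M).
  apply: le_trans (dotv_le_mx _ _) _; apply: ler_wpM2l => //.
  by apply: ler_pM => //; exact: ltW hD.
have hb2 : n%:R * (eta' * M) <= eta.
  have -> : n%:R * (eta' * M) = eta * (n%:R * M / (n%:R * M + 1)).
    by rewrite /eta'; field; rewrite gt_eqF.
  rewrite ger_pMr // ler_pdivrMr // mul1r; lra.
have hX : - eta <= dotv (grad V xi - grad V y) (s y).
  move: hb; rewrite ler_norml => /andP[hb _]; lra.
have : alpha * (- eta) <= alpha * dotv (grad V xi - grad V y) (s y).
  by apply: ler_wpM2l => //; exact: ltW.
move: hc; rewrite e1 mulrN; lra.
Qed.

End Final.

Unset Implicit Arguments. Set Strict Implicit.

Theorem theorem3 (R : realType) (n : nat) (A Xi : set 'rV[R]_n)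
    (V : 'rV[R]_n -> R) (Psi : 'rV[R]_n -> set 'rV[R]_n)
    (s : 'rV[R]_n -> 'rV[R]_n) :
  A !=set0 -> compact A -> (forall y, 0 <= V y) ->
  ((Xi !=set0 /\ closed Xi /\ convex_set Xi /\ convex_set A /\
      V = (fun y => 2^-1 * enorm (y - projS A y) ^+ 2))
   \/
   (Xi = setT /\ C1_loc_lip_grad V /\ pos_def A V /\ rad_unb A V)) ->
  SPSP A Xi V Psi ->
  (forall y, Xi y -> Psi y = [set s y]) ->
  (forall sigma : R, 0 < sigma -> exists L : R, 0 < L /\
     forall y1 y2, Xi y1 -> cball sigma A y1 -> Xi y2 -> cball sigma A y2 ->
       enorm (s y1 - s y2) <= L * enorm (y1 - y2)) ->
  SPAS A Xi s.
Proof.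
move=> A0 cA V0 Hcase [sc [eps0 [b [eps00 [b0 [Hb Hphi]]]]]] HPsi Hl.
have AXi : A `<=` Xi.
  move=> a Aa; have [r [r0 hr]] := sc a Aa; apply: hr.
  by rewrite subrr enorm0.
have hb : forall y, Xi y -> dist A y <= eps0 -> - b <= dotv (grad V y) (s y).
  by move=> y Xy hy; apply: Hb => //; rewrite HPsi.
have hphi : forall sigma, eps0 < sigma -> exists phi : 'rV[R]_n -> R, continuous phi /\
      forall y, Xi y -> dist A y <= sigma -> ~ (dist A y < eps0) ->
        0 < phi y /\ phi y <= dotv (grad V y) (s y).
  move=> sigma hs; have [phi [cphi [pos [_ bnd]]]] := Hphi sigma hs.
  exists phi; split => // y Xy h1 h2; split; first exact: pos.
  by apply: bnd => //; rewrite HPsi.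
case: Hcase => [[Xi0 [cXi [cvXi [cvA eV]]]] | [eXi [C1 [_ rad]]]].
  have clA := compact_closedA cA.
  apply: (core_SPAS A0 cA cXi V0 _ _ _ _ eps00 b0 hb hphi).
  - rewrite eV => x.
    apply: (@continuousM _ _ (cst 2^-1) (fun y => dist A y ^+ 2)).
      exact: cst_continuous.
    have hd : {for x, continuous (dist A)} by apply: dist_cont.
    have hc := continuous_comp hd (@exprn_continuous R 2 (dist A x)).
    exact: hc.
  - rewrite eV => B; exists (2 * `|B| + 1); split.
      by have := normr_ge0 B; lra.
    move=> x _ /negP; rewrite /cball /= -ltNge => hx.
    change (B < 2^-1 * dist A x ^+ 2).
    set d := dist A x in hx *.
    have hdd : d <= d ^+ 2.
      have h : 0 <= d * (d - 1) by apply: mulr_ge0; have := normr_ge0 B; lra.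
      by rewrite mulrBr mulr1 subr_ge0 in h; rewrite expr2.
    have := ler_norm B; have := normr_ge0 B.
    have i2 : (0:R) < 2^-1 by rewrite invr_gt0 ltr0n.
    have e2 : 2^-1 * (2 * `|B| + 1) = `|B| + 2^-1 by field.
    have : 2^-1 * (2 * `|B| + 1) < 2^-1 * d ^+ 2.
      by rewrite ltr_pM2l //; apply: lt_le_trans hx hdd.
    lra.
  - move=> alpha y _ _; have [h _] := projS_nearest (y - alpha *: s y) Xi0 cXi; exact: h.
  - rewrite eV; exact: desc_caseI.
subst Xi.
have [dV _] := C1.
apply: (core_SPAS A0 cA closedT V0 _ rad _ _ eps00 b0 hb hphi).
- by move=> x; apply: differentiable_continuous.
- by [].
- exact: desc_caseII.
Qed.
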